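(* Let $R=\Bbbk[x_1,\ldots,x_N]$ with maximal homogeneous ideal $\mathfrak m=(x_1,\ldots,x_N)$. Let $I$ be a non-zero monomial ideal of $R$ and $x$ a variable of $R$ such that $I:x=\mathfrak m$. Then $\operatorname{reg}(I)\le\max\{2,\operatorname{reg}(I+(x))\}$.
   Context: $\operatorname{reg}$ denotes Castelnuovo–Mumford regularity. *)

(* Defs.v *)
From mathcomp Require Import all_boot all_algebra.
Set Implicit Arguments. Unset Strict Implicit. Unset Printing Implicit Defensive.
Import GRing.Theory Num.Theory.

(* Monomials of R = k[x_1..x_N] are exponent vectors a : 'I_N -> nat.
   A monomial ideal is identified with its (upward closed) set of monomials. *)
Definition expo (N : nat) := {ffun 'I_N -> nat}.

Definition mono_ideal N (M : pred (expo N)) : Prop :=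
  forall a b : expo N, M a -> (forall j, a j <= b j) -> M b.

Definition zero_exp N : expo N := [ffun=> 0%N].
Definition unit_exp N (x : 'I_N) : expo N := [ffun j => nat_of_bool (j == x)].
Definition add_exp N (a b : expo N) : expo N := [ffun j => a j + b j].
Definition sub_set_exp N (a : expo N) (F : {set 'I_N}) : expo N :=
  [ffun j => a j - nat_of_bool (j \in F)].
Definition supp_exp N (a : expo N) : {set 'I_N} := [set j | 0 < a j].
Definition deg_exp N (a : expo N) : nat := \sum_j a j.

Definition plus_var N (M : pred (expo N)) (x : 'I_N) : pred (expo N) :=
  fun a => M a || (0 < a x).

(* Multidegree-a strand of the Koszul complex I (x) K(x_1..x_N):
   in homological degree i it has basis the F with |F| = i, e_F <= a and
   x^(a - e_F) in I. *)
Definition kvalid N (M : pred (expo N)) (a : expo N) (F : {set 'I_N}) : bool :=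
  (F \subset supp_exp a) && M (sub_set_exp a F).

(* Koszul differential d_i (row-vector convention: rows = source basis F of
   degree i, columns = target basis G), e_F |-> sum_{j in F} (-1)^{#{l in F, l<j}} x_j e_{F\j}. *)
Definition koszul_bd (k : fieldType) N (M : pred (expo N)) (a : expo N) (i : nat)
  : 'M[k]_(#|{set 'I_N}|) :=
  (\matrix_(r, c)
    (let F : {set 'I_N} := enum_val r in let G : {set 'I_N} := enum_val c in
     if [&& kvalid M a F, kvalid M a G, #|F| == i, G \subset F & #|F| == #|G|.+1]
     then \sum_(j in F :\: G) (-1) ^+ #|[set l in F | (l < j)%N]|
     else 0))%R.

(* beta_{i,a}(I) = dim_k Tor_i(I,k)_a = dim H_i of the a-strand above *)
Definition betti (k : fieldType) N (M : pred (expo N)) (i : nat) (a : expo N) : nat :=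
  #|[set F : {set 'I_N} | kvalid M a F & #|F| == i]|
  - \rank (koszul_bd k M a i) - \rank (koszul_bd k M a i.+1).

Definition reg_le (k : fieldType) N (M : pred (expo N)) (r : int) : Prop :=
  forall (i : nat) (a : expo N), betti k M i a != 0%N ->
    ((deg_exp a)%:Z - i%:Z <= r)%R.

(* Main.v *)
Require Import Defs.
From mathcomp Require Import all_boot all_algebra.
From mathcomp Require Import all_order zify.
Local Open Scope ring_scope.

Lemma bd_eq (k : fieldType) N (M1 M2 : pred (expo N)) a (i : nat) :
  (forall F : {set 'I_N}, (#|F| <= i)%N -> kvalid M1 a F = kvalid M2 a F) ->
  koszul_bd k M1 a i = koszul_bd k M2 a i.
Proof.
move=> H; apply/matrixP => r c; rewrite !mxE /=.
set F := enum_val r; set G := enum_val c.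
case E1: (#|F| == i); case E2: (#|F| == #|G|.+1);
  rewrite ?(andbF, andFb) //.
have hF : (#|F| <= i)%N by rewrite (eqP E1).
have hG : (#|G| <= i)%N by move/eqP: E1; move/eqP: E2; lia.
by rewrite (H F hF) (H G hG).
Qed.

Lemma betti_eq (k : fieldType) N (M1 M2 : pred (expo N)) a (i : nat) :
  (forall F : {set 'I_N}, (#|F| <= i.+1)%N -> kvalid M1 a F = kvalid M2 a F) ->
  betti k M1 i a = betti k M2 i a.
Proof.
move=> H; rewrite /betti (bd_eq k _ _ _ _ _ (fun F h => H F (leqW h))) (bd_eq k _ _ _ _ _ H).
congr (_ - _ - _)%N; apply: eq_card => F; rewrite !inE.
case E: (#|F| == i); rewrite ?andbF // H // (eqP E) //.

Qed.

Lemma deg_split N (a : expo N) (F : {set 'I_N}) :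
  F \subset supp_exp a -> deg_exp a = (deg_exp (sub_set_exp a F) + #|F|)%N.
Proof.
move=> S; rewrite /deg_exp -sum1_card [X in (_ + X)%N]big_mkcond -big_split /=.
apply: eq_bigr => j _; rewrite ffunE.
case jF: (j \in F) => /=; last by rewrite subn0 addn0.
have : j \in supp_exp a by apply: (subsetP S).
rewrite inE => hj; lia.
Qed.

Theorem lemma3p8 (k : fieldType) (N : nat) (M : pred (expo N)) (x : 'I_N) :
  mono_ideal M ->
  (exists a : expo N, M a) ->
  (forall a : expo N, M (add_exp a (unit_exp x)) = (a != zero_exp N)) ->
  forall r : int, reg_le k (plus_var M x) r -> reg_le k M (Num.max (2 : int) r).
Proof.
move=> _ _ hx r hreg i a hb.
have [small|big] := leqP (deg_exp a) i.+2.
  have h2 : ((deg_exp a)%:Z - i%:Z <= 2 :> int) by lia.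
  apply: (Order.POrderTheory.le_trans h2).
  by rewrite Order.TotalTheory.le_max Order.POrderTheory.lexx.
have key : forall F : {set 'I_N}, (#|F| <= i.+1)%N ->
    kvalid M a F = kvalid (plus_var M x) a F.
  move=> F hF; rewrite /kvalid /plus_var.
  case S: (F \subset supp_exp a) => //=.
  case HM: (M (sub_set_exp a F)) => //=.
  symmetry; apply/negbTE/negP => pos.
  set c := sub_set_exp a F in HM pos.
  set b := sub_set_exp c [set x].
  have cb : c = add_exp b (unit_exp x).
    apply/ffunP => j; rewrite !ffunE inE.
    case: (eqVneq j x) => [->|nj] /=; rewrite ?eqxx ?(negbTE nj) /=.
    - by move: pos; rewrite /c ffunE; lia.
    - lia.
  move: HM; rewrite cb hx => /negbFE /eqP b0.
  have dc : deg_exp c = 1%N.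
    rewrite cb b0 /deg_exp.
    rewrite (eq_bigr (fun j => nat_of_bool (j == x))); last first.
      by move=> j _; rewrite !ffunE.
    by rewrite -big_mkcond /= big_pred1_eq.
  have := deg_split _ _ _ S; rewrite -/c dc; lia.
rewrite (betti_eq k _ _ _ _ _ key) in hb.
apply: (Order.POrderTheory.le_trans (hreg _ _ hb)).
by rewrite Order.TotalTheory.le_max Order.POrderTheory.lexx orbT.
Qed.
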